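(* Let $n\ge 3$ be an integer and $a,b\in\mathbb{C}$ with $b\neq 0$. Let $A$ be the $n\times n$ tridiagonal matrix with all diagonal entries equal to $a$, all subdiagonal entries $A_{k+1,k}$ ($k=1,\dots,n-1$) equal to $b$, superdiagonal entries $A_{1,2}=A_{n-1,n}=2b$, and all other superdiagonal entries $A_{k,k+1}=b$ ($2\le k\le n-2$); all remaining entries are $0$. Then the eigenvalues of $A$ are $$\lambda_k=a+2b\cos\left(\frac{(k-1)\pi}{n-1}\right),\quad k=1,2,\dots,n,$$ and, writing $\delta_j=\frac{\lambda_j-a}{b}$, for each $j=1,\dots,n$ the vector $(x_{1j},\dots,x_{nj})^T$ with $$x_{kj}=T_{k-1}\left(\tfrac{\delta_j}{2}\right)\ (k=1,\dots,n-1),\qquad x_{nj}=\tfrac12 T_{n-1}\left(\tfrac{\delta_j}{2}\right)$$ is an eigenvector of $A$ corresponding to $\lambda_j$.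
   Context: $T_m(x)$ denotes the Chebyshev polynomial of the first kind: $T_0=1$, $T_1=x$, $T_{m+1}(x)=2xT_m(x)-T_{m-1}(x)$, equivalently $T_m(\cos\theta)=\cos(m\theta)$. *)

(* Defs.v *)
From HB Require Import structures.
From mathcomp Require Import all_boot all_order all_algebra.
From mathcomp Require Import complex.
From mathcomp Require Import reals trigo.

Set Implicit Arguments. Unset Strict Implicit. Unset Printing Implicit Defensive.
Import Order.TTheory GRing.Theory Num.Theory.
Local Open Scope ring_scope.

Fixpoint chebT {K : pzRingType} (m : nat) (x : K) : K :=
  match m with
  | 0%N => 1
  | 1%N => x
  | (m'.+1 as m1).+1 => 2 * x * chebT m1 x - chebT m' x
  end.

Definition tridA {K : pzRingType} (n : nat) (a b : K) : 'M[K]_n :=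
  \matrix_(i < n, j < n)
    if (i == j :> nat) then a
    else if (i == j.+1 :> nat) then b
    else if (j == i.+1 :> nat) then
      (if (i == 0%N :> nat) || (i == n.-2 :> nat) then 2 * b else b)
    else 0.

(* lambda_k (0-based k = paper's k-1): a + 2 b cos(k pi / (n-1)). *)
Definition lam (R : realType) (n : nat) (a b : R[i]) (k : nat) : R[i] :=
  a + 2 * b * (real_complex R (cos ((k%:R * pi) / (n.-1)%:R))).

Definition evec (R : realType) (n : nat) (a b : R[i]) (j : nat) : 'cV[R[i]]_n :=
  let d := (lam n a b j - a) / b in
  \col_(k < n) (if (k < n.-1)%N then chebT k (d / 2) else chebT k (d / 2) / 2).

(* Main.v *)
Require Import Defs.
From HB Require Import structures.
From mathcomp Require Import all_boot all_order all_algebra.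
From mathcomp Require Import complex.
From mathcomp Require Import reals trigo.
From mathcomp Require Import zify ring.
Import Order.TTheory GRing.Theory Num.Theory.
Local Open Scope ring_scope.
Lemma chebTSS {K : pzRingType} m (x : K) : chebT m.+2 x = 2 * x * chebT m.+1 x - chebT m x.
Proof. by []. Qed.

Definition Aent {K : pzRingType} (n : nat) (a b : K) (i k : nat) : K :=
    if (i == k) then a
    else if (i == k.+1) then b
    else if (k == i.+1) then
      (if (i == 0%N) || (i == n.-2) then 2 * b else b)
    else 0.

Definition vent {K : fieldType} (n : nat) (y : K) (k : nat) : K :=
  if (k < n.-1)%N then chebT k y else chebT k y / 2.

Lemma sum_window {K : nmodType} n lo hi (g : nat -> K) : (lo <= hi <= n)%N ->
  (forall j, (j < n)%N -> (j < lo)%N || (hi <= j)%N -> g j = 0) ->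
  \sum_(0 <= j < n) g j = \sum_(lo <= j < hi) g j.
Proof.
move=> /andP[h1 h2] H.
rewrite (big_cat_nat (n:=lo)) ?(leq_trans h1 h2) //.
rewrite [X in _ + X = _](big_cat_nat (n:=hi)) //=.
rewrite big1_seq ?add0r; last first.
  move=> j; rewrite mem_index_iota => /andP[_ hj]; apply: H; lia.
rewrite [X in _ + X]big1_seq ?addr0 //.
move=> j; rewrite mem_index_iota => /andP[hj1 hj]; apply: H; lia.
Qed.

Lemma sum3 {K : nmodType} l (F : nat -> K) :
  \sum_(l <= j < l.+3) F j = F l + F l.+1 + F l.+2.
Proof. rewrite /index_iota (_ : (l.+3 - l = 3)%N); last by lia.
by rewrite /= !big_cons big_nil addr0 addrA. Qed.
Lemma sum2 {K : nmodType} l (F : nat -> K) :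
  \sum_(l <= j < l.+2) F j = F l + F l.+1.
Proof. rewrite /index_iota (_ : (l.+2 - l = 2)%N); last by lia.
by rewrite /= !big_cons big_nil addr0. Qed.

Lemma Z (K : fieldType) m (a b y : K) i lo hi : (lo <= hi <= m.+3)%N ->
   (forall j, (j < m.+3)%N -> (j < lo)%N || (hi <= j)%N -> Aent m.+3 a b i j = 0) ->
   \sum_(0 <= k < m.+3) Aent m.+3 a b i k * vent m.+3 y k =
   \sum_(lo <= k < hi) Aent m.+3 a b i k * vent m.+3 y k.
Proof. by move=> hh HA; apply: sum_window => // j hj /(HA _ hj) ->; rewrite mul0r. Qed.

Lemma row_ok (K : fieldType) m (a b y : K) (h2 : (2:K) != 0)
  (H : chebT m.+1 y = y * chebT m.+2 y) i : (i < m.+3)%N ->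
  \sum_(0 <= k < m.+3) Aent m.+3 a b i k * vent m.+3 y k =
  (a + 2 * b * y) * vent m.+3 y i.
Proof.
move=> hi.
case: i hi => [|i] hi.
  rewrite (@Z _ _ _ _ _ _ 0%N 2%N) // ?sum2; last first.
    move=> j hj hj'; rewrite /Aent; repeat case: ifP => ? //; lia.
  rewrite /Aent /vent /=; ring.
case: (ltngtP i m) => [lt|gt|->].
- rewrite (@Z _ _ _ _ _ _ i i.+3) ?sum3; [|lia|]; last first.
    move=> j hj hj'; rewrite /Aent; repeat case: ifP => ? //; lia.
  rewrite /Aent /vent; repeat (case: ifP => ?); try (exfalso; lia).
  rewrite chebTSS; ring.
- have -> : i = m.+1 by lia.
  rewrite (@Z _ _ _ _ _ _ m.+1 m.+3) ?sum2; [|lia|]; last first.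
    move=> j hj hj'; rewrite /Aent; repeat case: ifP => ? //; lia.
  rewrite /Aent /vent; repeat (case: ifP => ?); try (exfalso; lia).
  by rewrite H; field.
- rewrite (@Z _ _ _ _ _ _ m m.+3) ?sum3; [|lia|]; last first.
    move=> j hj hj'; rewrite /Aent; repeat case: ifP => ? //; lia.
  rewrite /Aent /vent; repeat (case: ifP => ?); try (exfalso; lia).
  by rewrite chebTSS; field.
Qed.
Lemma chebT_C (R : realType) m (x : R) : chebT m (real_complex R x) = real_complex R (chebT m x).
Proof.
suff : chebT m (real_complex R x) = real_complex R (chebT m x) /\ chebT m.+1 (real_complex R x) = real_complex R (chebT m.+1 x) by case.
elim: m => [|m [IH1 IH2]]; first by split.
split => //; rewrite !chebTSS IH1 IH2.
by rewrite rmorphB /= !rmorphM /= rmorph_nat.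
Qed.

Lemma chebT_cos (R : realType) m (t : R) : chebT m (cos t) = cos (m%:R * t).
Proof.
suff : chebT m (cos t) = cos (m%:R * t) /\ chebT m.+1 (cos t) = cos (m.+1%:R * t) by case.
elim: m => [|m [IH1 IH2]]; first by rewrite mul0r cos0 mul1r.
split => //; rewrite chebTSS IH1 IH2.
have E1 : cos (m.+2%:R * t) = cos (m.+1%:R * t) * cos t - sin (m.+1%:R * t) * sin t.
  by rewrite -cosD (mulrSr 1 m.+1) mulrDl mul1r.
have E2 : cos (m%:R * t) = cos (m.+1%:R * t) * cos t + sin (m.+1%:R * t) * sin t.
  by rewrite -cosB (mulrSr 1 m) mulrDl mul1r addrK.
rewrite E1 E2; ring.
Qed.

Lemma last_row (R : realType) m (j : nat) :
  let c := cos (j%:R * pi / m.+2%:R) : R in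
  chebT m.+1 c = c * chebT m.+2 c.
Proof.
move=> c; rewrite /c !chebT_cos.
set t := j%:R * pi / m.+2%:R.
have hN : m.+2%:R != 0 :> R by rewrite pnatr_eq0.
have E3 : m.+2%:R * t = pi *+ j.
  by rewrite /t mulrC divfK // mulr_natl.
have S : sin (pi *+ j) = 0 :> R.
  by have := alternatingn (@sinDpi R) j 0; rewrite add0r sin0 mulr0.
have E4 : cos (m.+1%:R * t) = cos (m.+2%:R * t) * cos t + sin (m.+2%:R * t) * sin t.
  by rewrite -cosB (mulrSr 1 m.+1) mulrDl mul1r addrK.
transitivity (cos (m.+2%:R * t) * cos t + sin (m.+2%:R * t) * sin t); first exact: E4.
by rewrite E3 S mul0r addr0 mulrC.
Qed.
Lemma char_poly_tr (R : comNzRingType) n (A : 'M[R]_n) : char_poly A^T = char_poly A.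
Proof.
rewrite /char_poly -det_tr; congr (\det _); apply/matrixP => i j; rewrite !mxE eq_sym.
by [].
Qed.

Lemma tridA_E (K : pzRingType) n (a b : K) : tridA n a b = \matrix_(i < n, k < n) Aent n a b i k.
Proof. by apply/matrixP => i k; rewrite !mxE. Qed.

Lemma evec_E (R : realType) n (a b : R[i]) j :
  evec n a b j = \col_(k < n) vent n ((lam n a b j - a) / b / 2) k.
Proof. by apply/matrixP => i k; rewrite !mxE. Qed.

Lemma in_0pi (R : realType) m k : (k <= m.+2)%N -> (k%:R * pi / m.+2%:R : R) \in `[0, pi].
Proof.
move=> hk; rewrite in_itv /=; apply/andP; split.
  by rewrite divr_ge0 // mulr_ge0 // pi_ge0.
rewrite ler_pdivrMr ?ltr0n // mulrC ler_wpM2l ?pi_ge0 //.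
by rewrite ler_nat.
Qed.

Theorem theorem1 (R : realType) (n : nat) (a b : R[i]) (hn : (3 <= n)%N) (hb : b != 0) :
  char_poly (tridA n a b) = \prod_(k < n) ('X - (lam n a b k)%:P)
  /\ (forall j : 'I_n,
        evec n a b j != 0 /\ tridA n a b *m evec n a b j = lam n a b j *: evec n a b j).
Proof.
move: hn; case: n => [|[|[|m]]] // _.
pose y (j : nat) := real_complex R (cos (j%:R * pi / m.+2%:R)).
have L : forall j, lam m.+3 a b j = a + 2 * b * y j by [].
have h2 : (2 : R[i]) != 0 by rewrite pnatr_eq0.
have D : forall j, (lam m.+3 a b j - a) / b / 2 = y j.
  by move=> j; rewrite L; field.
have EV : forall j : 'I_m.+3,
    tridA m.+3 a b *m evec m.+3 a b j = lam m.+3 a b j *: evec m.+3 a b j.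
  move=> j; rewrite tridA_E evec_E D; apply/matrixP => i k; rewrite !mxE.
  under eq_bigr => l _ do rewrite !mxE.
  rewrite -(big_mkord xpredT (fun l => Aent m.+3 a b i l * vent m.+3 (y j) l)).
  rewrite L; apply: row_ok => //.
  have E : chebT m.+1 (cos (j%:R * pi / m.+2%:R)) =
      cos (j%:R * pi / m.+2%:R) * chebT m.+2 (cos (j%:R * pi / m.+2%:R) : R)
    := last_row R m j.
  by rewrite /y !chebT_C E rmorphM.
have NZ : forall j : 'I_m.+3, evec m.+3 a b j != 0.
  move=> j; rewrite evec_E; apply/eqP => E.
  have := congr1 (fun M : 'cV_m.+3 => M ord0 ord0) E; rewrite !mxE /vent /=.
  by move/eqP; rewrite oner_eq0.
split; last by move=> j; split; [exact: NZ|exact: EV].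
have RT : forall j : 'I_m.+3, root (char_poly (tridA m.+3 a b)) (lam m.+3 a b j).
  move=> j; rewrite -char_poly_tr -eigenvalue_root_char; apply/eigenvalueP.
  exists (evec m.+3 a b j)^T; first by rewrite -trmx_mul EV linearZ.
  apply: contra (NZ j) => /eqP h; apply/eqP.
  by rewrite -[evec _ _ _ _]trmxK h trmx0.
have INJ : injective (fun k : 'I_m.+3 => lam m.+3 a b k).
  move=> k1 k2; rewrite /= !L => /addrI /mulfI.
  have nz : 2 * b != 0 by rewrite mulf_neq0.
  move=> /(_ nz) /complexI /cos_inj.
  move=> /(_ (@in_0pi R m k1 (ltnSE (ltn_ord k1))) (@in_0pi R m k2 (ltnSE (ltn_ord k2)))).
  have hN : m.+2%:R != 0 :> R by rewrite pnatr_eq0.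
  move/(mulIf (invr_neq0 hN))/(mulIf (lt0r_neq0 (@pi_gt0 R)))/eqP.
  by rewrite eqr_nat => /eqP /val_inj.
have := @all_roots_prod_XsubC _ (char_poly (tridA m.+3 a b))
   [seq lam m.+3 a b k | k : 'I_m.+3 <- enum 'I_m.+3].
rewrite size_char_poly size_map size_enum_ord => /(_ erefl).
rewrite (monicP (char_poly_monic _)) scale1r big_map big_enum /=.
apply.
  by apply/allP => z /mapP [k _ ->]; apply: RT.
by rewrite uniq_rootsE map_inj_uniq ?enum_uniq.
Qed.
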